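(* In the Rustichini setting, let $\epsilon>0$ and $\mathcal G\subset\mathcal F$, let $\Pi=\{\pi\in\Delta_k:\operatorname{dist}_1(\pi,\mathcal N(F))\ge\epsilon\text{ for all nonempty }F\in\mathcal G\}$, and assume $U=\bigcup_{F\in\mathcal F\setminus\mathcal G}F$ is nonempty. Define $f,g:\mathcal K\to[0,\infty]$ by $f(x)=\inf_{\pi\in\Pi}\Delta(\pi,x)$ (with $\inf\emptyset=+\infty$) and $g(x)=\operatorname{dist}_1(x,U)$. Then there is a constant $c_\epsilon>0$, depending only on the game, $\epsilon$ and $\mathcal G$, such that $f(x)\ge c_\epsilon\, g(x)$ for all $x\in\mathcal K$.
   Context: Rustichini setting: a $k$-action partial monitoring game with finite latent space $\mathcal Z$, loss $\mathcal L:[k]\times\mathcal Z\to[0,1]$, signal $\mathcal S:[k]\times\mathcal Z\to\Sigma$; $\mathcal K$ = probability simplex on $\mathcal Z$; $\Delta_k$ = probability simplex on $[k]$; $\mathcal L(\pi,x)=\sum_{a,z}\pi(a)x(z)\mathcal L(a,z)$; $\mathcal S(a,x)$ = law of $\mathcal S(a,z)$, $z\sim x$; $x\,\mathrm R\,y$ iff $\mathcal S(a,x)=\mathcal S(a,y)$ for all $a$; $\mathcal V(\pi,x)=\sup_{y\,\mathrm R\,x}\mathcal L(\pi,y)$; $\mathcal V_\star(x)=\min_{\pi\in\Delta_k}\mathcal V(\pi,x)$; $\Delta(\pi,x)=\mathcal V(\pi,x)-\mathcal V_\star(x)$. $m$ is the smallest integer with $\mathcal V_\star(x)=\min_{\alpha\in[m]}\mathcal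 V^m(x)_\alpha$ for some linear $\mathcal V^m:\mathcal K\to\mathbb R^m$; cells $P_\alpha=\{x\in\mathcal K:\mathcal V_\star(x)=\mathcal V^m(x)_\alpha\}$; $\mathcal F=\bigcup_{\alpha\in[m]}\operatorname{faces}(P_\alpha)$. $\mathcal N(x)=\{\pi\in\Delta_k:\Delta(\pi,x)=0\}$; for nonempty $F\in\mathcal F$, $\mathcal N(F)=\mathcal N(x)$ for any $x$ in the relative interior of $F$ (independent of the choice). $\operatorname{dist}_1(x,C)=\inf_{y\in C}\|x-y\|_1$. *)

(* Defs.v *)
From HB Require Import structures.
From mathcomp Require Import all_boot all_order all_algebra.
From mathcomp Require Import all_classical all_reals.
From mathcomp Require Import ereal.
Import Order.TTheory GRing.Theory Num.Theory.
Set Implicit Arguments. Unset Strict Implicit. Unset Printing Implicit Defensive.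
Local Open Scope ring_scope.
Local Open Scope classical_set_scope.

Definition norm1 (R : realType) (T : finType) (u v : T -> R) : R :=
  \sum_(t : T) `|u t - v t|.

Definition dist1 (R : realType) (T : finType) (p : T -> R) (C : set (T -> R)) : \bar R :=
  ereal_inf [set (norm1 p q)%:E | q in C].

Definition simplex (R : realType) (T : finType) : set (T -> R) :=
  [set x | (forall t, 0 <= x t) /\ \sum_(t : T) x t = 1].

Definition dotp (R : realType) (T : finType) (a x : T -> R) : R := \sum_(t : T) a t * x t.

Definition aff (R : realType) (T : finType) (F : set (T -> R)) : set (T -> R) :=
  [set y | exists (n : nat) (p : 'I_n -> T -> R) (lam : 'I_n -> R),
      (forall i, F (p i)) /\ \sum_(i < n) lam i = 1 /\
      y = (fun t => \sum_(i < n) lam i * p i t)].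

Definition relint (R : realType) (T : finType) (F : set (T -> R)) : set (T -> R) :=
  [set x | F x /\ exists e : R, 0 < e /\
      forall y, aff F y -> norm1 x y < e -> F y].

(* faces of a (convex polyhedral) set P: intersections with supporting
   hyperplanes; includes P itself (a = 0, b = 0) and the empty face. *)
Definition face (R : realType) (T : finType) (P F : set (T -> R)) : Prop :=
  exists (a : T -> R) (b : R), (forall y, P y -> dotp a y <= b) /\
    F = P `&` [set y | dotp a y = b].

Section Rustichini.
Variables (R : realType) (k : nat) (Z : finType) (Sig : eqType)
  (L : 'I_k -> Z -> R) (S : 'I_k -> Z -> Sig).

Definition lossp (pi : 'I_k -> R) (x : Z -> R) : R :=
  \sum_(a < k) \sum_(z : Z) pi a * x z * L a z.

(* x R y : S(a,x) = S(a,y) for all a (equal laws of the signal) *)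
Definition sigrel (x y : Z -> R) : Prop :=
  forall (a : 'I_k) (s : Sig),
    \sum_(z : Z | S a z == s) x z = \sum_(z : Z | S a z == s) y z.

Definition Vf (pi : 'I_k -> R) (x : Z -> R) : R :=
  sup [set lossp pi y | y in [set y | simplex y /\ sigrel y x]].

Definition Vstar (x : Z -> R) : R := inf [set Vf pi x | pi in @simplex R 'I_k].

Definition Delta (pi : 'I_k -> R) (x : Z -> R) : R := Vf pi x - Vstar x.

Definition Nset (x : Z -> R) : set ('I_k -> R) :=
  [set pi | simplex pi /\ Delta pi x = 0].

Definition Vm (m : nat) (w : 'I_m -> Z -> R) (x : Z -> R) (al : 'I_m) : R :=
  \sum_(z : Z) x z * w al z.

Definition represents (m : nat) (w : 'I_m -> Z -> R) : Prop :=
  forall x, simplex x ->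
    (exists al, Vstar x = Vm w x al) /\ (forall al, Vstar x <= Vm w x al).

Definition minimal_rep (m : nat) (w : 'I_m -> Z -> R) : Prop :=
  represents w /\ forall m' (w' : 'I_m' -> Z -> R), represents w' -> (m <= m')%N.

Definition cell (m : nat) (w : 'I_m -> Z -> R) (al : 'I_m) : set (Z -> R) :=
  [set x | simplex x /\ Vstar x = Vm w x al].

Definition faces (m : nat) (w : 'I_m -> Z -> R) : set (set (Z -> R)) :=
  [set F | exists al, face (cell w al) F].

Definition NF (F : set (Z -> R)) : set ('I_k -> R) :=
  Nset (xget (fun _ => 0) (relint F)).

Definition PiSet (eps : R) (G : set (set (Z -> R))) : set ('I_k -> R) :=
  [set pi | simplex pi /\
     forall F, G F -> F !=set0 -> (eps%:E <= dist1 pi (NF F))%E].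

Definition Uset (m : nat) (w : 'I_m -> Z -> R) (G : set (set (Z -> R))) : set (Z -> R) :=
  \bigcup_(F in [set F | faces w F /\ ~ G F]) F.

Definition ffun (eps : R) (G : set (set (Z -> R))) (x : Z -> R) : \bar R :=
  ereal_inf [set (Delta pi x)%:E | pi in PiSet eps G].

Definition gfun (m : nat) (w : 'I_m -> Z -> R) (G : set (set (Z -> R))) (x : Z -> R) : \bar R :=
  dist1 x (Uset w G).

End Rustichini.

(* Main.v *)
Require Import Defs.
From HB Require Import structures.
From mathcomp Require Import all_boot all_order all_algebra.
From mathcomp Require Import all_classical all_reals.
From mathcomp Require Import ereal.
From mathcomp Require Import topology normedtype.
From mathcomp Require Import ring lra.
Import Order.TTheory GRing.Theory Num.Theory.
Set Implicit Arguments. Unset Strict Implicit. Unset Printing Implicit Defensive.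
Local Open Scope ring_scope.
Local Open Scope classical_set_scope.
Section P1.
Variables (R : realType) (k : nat) (Z : finType) (Sig : eqType)
  (L : 'I_k -> Z -> R) (S : 'I_k -> Z -> Sig).
Hypothesis L01 : forall a z, 0 <= L a z <= 1.

Definition comb (T : Type) (t : R) (x y : T -> R) : T -> R :=
  fun z => t * x z + (1 - t) * y z.

Lemma simplex_bnd (T : finType) (x : T -> R) : simplex x -> forall t, 0 <= x t <= 1.
Proof.
move=> [x0 x1] t; rewrite x0 /= -x1 (bigD1 t) //= lerDl.
by apply: sumr_ge0 => i _.
Qed.

Lemma norm1_ge0 (T : finType) (x y : T -> R) : 0 <= norm1 x y.
Proof. by apply: sumr_ge0 => i _. Qed.

Lemma norm1_le2 (T : finType) (x y : T -> R) : simplex x -> simplex y -> norm1 x y <= 2.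
Proof.
move=> [x0 x1] [y0 y1]; rewrite /norm1.
apply: (le_trans (y := \sum_t (x t + y t))).
  apply: ler_sum => t _; apply: (le_trans (ler_normB _ _)).
  by rewrite !ger0_norm.
by rewrite big_split /= x1 y1.
Qed.

Lemma norm1C (T : finType) (x y : T -> R) : norm1 x y = norm1 y x.
Proof. by apply: eq_bigr => t _; rewrite distrC. Qed.

Lemma norm1_triangle (T : finType) (x y z : T -> R) : norm1 x z <= norm1 x y + norm1 y z.
Proof.
rewrite /norm1 -big_split; apply: ler_sum => t _.
have -> : x t - z t = (x t - y t) + (y t - z t) by ring.
exact: ler_normD.
Qed.

Lemma norm1xx (T : finType) (x : T -> R) : norm1 x x = 0.
Proof. by rewrite /norm1 big1 // => t _; rewrite subrr normr0. Qed.

Lemma simplex_comb (T : finType) t (x y : T -> R) : 0 <= t <= 1 ->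
  simplex x -> simplex y -> simplex (comb t x y).
Proof.
move=> /andP[t0 t1] [x0 x1] [y0 y1]; split.
  move=> z; rewrite /comb; apply: addr_ge0; apply: mulr_ge0 => //.
  by rewrite subr_ge0.
by rewrite /comb big_split /= -!mulr_sumr x1 y1; ring.
Qed.

Definition ell (a : 'I_k) (y : Z -> R) := \sum_z y z * L a z.

Lemma lossp_ell pi y : lossp L pi y = \sum_a pi a * ell a y.
Proof.
apply: eq_bigr => a _; rewrite /ell mulr_sumr; apply: eq_bigr => z _; ring.
Qed.

Lemma ell_bnd a y : simplex y -> 0 <= ell a y <= 1.
Proof.
move=> [y0 y1]; apply/andP; split.
  apply: sumr_ge0 => z _; have := L01 a z; move: (y0 z); nra.
rewrite -y1; apply: ler_sum => z _; have := L01 a z; move: (y0 z); nra.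
Qed.

Lemma loss_bnd pi y : simplex pi -> simplex y -> 0 <= lossp L pi y <= 1.
Proof.
move=> [p0 p1] hy; rewrite lossp_ell; apply/andP; split.
  apply: sumr_ge0 => a _; have := ell_bnd a hy; move: (p0 a); nra.
rewrite -p1; apply: ler_sum => a _; have := ell_bnd a hy; move: (p0 a); nra.
Qed.

Lemma loss_lip pi pi' y : simplex y ->
  lossp L pi y <= lossp L pi' y + norm1 pi pi'.
Proof.
move=> hy; rewrite !lossp_ell /norm1 -big_split; apply: ler_sum => a _ /=.
have := ell_bnd a hy; have := ler_norm (pi a - pi' a).
have := normr_ge0 (pi a - pi' a); nra.
Qed.

Lemma loss_comb pi t y1 y2 :
  lossp L pi (comb t y1 y2) = t * lossp L pi y1 + (1 - t) * lossp L pi y2.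
Proof.
rewrite !lossp_ell !mulr_sumr -big_split; apply: eq_bigr => a _ /=.
rewrite /ell /comb !mulr_sumr -!big_split; apply: eq_bigr => z _ /=.
ring.
Qed.

Lemma sigrel_comb t y1 y2 x1 x2 : sigrel S y1 x1 -> sigrel S y2 x2 ->
  sigrel S (comb t y1 y2) (comb t x1 x2).
Proof.
move=> h1 h2 a s; rewrite /comb !big_split /= -!mulr_sumr.
by rewrite h1 h2.
Qed.

Lemma sigrel_refl (x : Z -> R) : sigrel S x x.
Proof. by []. Qed.

Definition VS pi x := [set lossp L pi y | y in [set y | simplex y /\ sigrel S y x]].

Lemma VS_sup pi x : simplex pi -> simplex x -> has_sup (VS pi x).
Proof.
move=> hp hx; split; first by exists (lossp L pi x); exists x.
exists 1 => _ [y [hy _] <-]; by case/andP: (loss_bnd hp hy).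
Qed.

Lemma Vf_ub pi x y : simplex pi -> simplex x -> simplex y -> sigrel S y x ->
  lossp L pi y <= Vf L S pi x.
Proof.
move=> hp hx hy hyx; have [_ hs] := VS_sup hp hx.
apply: (ub_le_sup hs); by exists y.
Qed.

Lemma Vf_le pi x M : simplex x ->
  (forall y, simplex y -> sigrel S y x -> lossp L pi y <= M) -> Vf L S pi x <= M.
Proof.
move=> hx h; apply: ge_sup; first by exists (lossp L pi x); exists x.
by move=> _ [y [hy hyx] <-]; apply: h.
Qed.

Lemma Vf_bnd pi x : simplex pi -> simplex x -> 0 <= Vf L S pi x <= 1.
Proof.
move=> hp hx; apply/andP; split.
  apply: le_trans (Vf_ub hp hx hx (sigrel_refl x)).
  by case/andP: (loss_bnd hp hx).
by apply: Vf_le => // y hy _; case/andP: (loss_bnd hp hy).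
Qed.

Lemma Vf_lip pi pi' x : simplex pi' -> simplex x ->
  Vf L S pi x <= Vf L S pi' x + norm1 pi pi'.
Proof.
move=> hp' hx; apply: Vf_le => // y hy hyx.
apply: le_trans (loss_lip pi pi' hy) _; rewrite lerD2r.
exact: Vf_ub.
Qed.

Lemma Vf_concave pi t x1 x2 : simplex pi -> 0 <= t <= 1 -> simplex x1 -> simplex x2 ->
  t * Vf L S pi x1 + (1 - t) * Vf L S pi x2 <= Vf L S pi (comb t x1 x2).
Proof.
move=> hp ht h1 h2; apply/ler_addgt0Pr => e e0.
have [y1 [z1 [hz1 hzx1] <-] hy1] := sup_adherent e0 (VS_sup hp h1).
have [y2 [z2 [hz2 hzx2] <-] hy2] := sup_adherent e0 (VS_sup hp h2).
have hc : lossp L pi (comb t z1 z2) <= Vf L S pi (comb t x1 x2).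
  apply: Vf_ub => //; first exact: simplex_comb.
  - exact: simplex_comb.
  - exact: sigrel_comb.
move: hc; rewrite loss_comb.
move: hy1 hy2; rewrite -/(Vf L S pi x1) -/(Vf L S pi x2).
case/andP: ht => t0 t1; nra.
Qed.

Lemma Vstar_le pi x : simplex pi -> simplex x -> Vstar L S x <= Vf L S pi x.
Proof.
move=> hp hx.
have hl : has_lbound [set Vf L S pi x | pi in @simplex R 'I_k].
  exists 0 => _ [p hp' <-]; by case/andP: (Vf_bnd hp' hx).
apply: (ge_inf hl); by exists pi.
Qed.

Lemma Delta_ge0 pi x : simplex pi -> simplex x -> 0 <= Delta L S pi x.
Proof. by move=> hp hx; rewrite subr_ge0; apply: Vstar_le. Qed.

End P1.
Lemma box_cluster (R : realType) k (u : nat -> 'I_k -> R) :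
  (forall n i, 0 <= u n i <= 1) ->
  exists p : 'I_k -> R, (forall i, 0 <= p i <= 1) /\
    forall r N, 0 < r -> exists n, (N <= n)%N /\ forall i, `|u n i - p i| < r.
Proof.
move=> u01.
have := @tychonoff 'I_k (fun _ : 'I_k => R^o) (fun _ => `[0, 1]%classic) (fun _ => @segment_compact R 0 1).
set A := [set f | _].
move=> cA.
pose v : nat -> prod_topology (fun _ : 'I_k => R) := u.
have /cA : (v @ \oo) A.
  exists 0%N => // n _; rewrite /A /= => i; rewrite in_itv /=; exact: u01.
move=> [p [Ap clp]].
exists p; split.
  move=> i; have := Ap i; by rewrite /= in_itv.
move=> r N r0.
have : nbhs p [set f : prod_topology (fun _ : 'I_k => R) | forall i, `|f i - p i| < r].
  have := @filter_forall _ 'I_k (fun i (f : prod_topology (fun _ : 'I_k => R^o)) => `|f i - p i| < r) (nbhs p) _.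
  move=> /(_ _) H; apply: H => i.
  have h : nbhs (p i : R^o) [set y : R^o | `|y - p i| < r].
    apply/nbhs_ballP; exists r => //= y; rewrite /ball /= distrC //.
  exact: (@proj_continuous 'I_k (fun _ => R^o) i p _ h).
move=> nb.
have h1 : (v @ \oo) [set v n | n in [set n | (N <= n)%N]].
  by exists N => // n /= Nn; exists n.
have [q [[n /= Nn qn] qr]] := clp _ _ h1 nb.
exists n; split => // i; by rewrite -/(v n) qn; apply: qr.
Qed.
Section P2.
Variables (R : realType) (k : nat) (Z : finType) (Sig : eqType)
  (L : 'I_k -> Z -> R) (S : 'I_k -> Z -> Sig).
Hypothesis L01 : forall a z, 0 <= L a z <= 1.

Lemma le0_small (a : R) : (forall r, 0 < r -> a <= r) -> a <= 0.
Proof. by move=> h; apply/ler_addgt0Pr => e e0; rewrite add0r; apply: h. Qed.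

Lemma delta_pos (x0 : Z -> R) eps : simplex x0 -> 0 < eps ->
  exists2 d, 0 < d & forall pi, simplex pi ->
    (eps%:E <= dist1 pi (Nset L S x0))%E -> d <= Delta L S pi x0.
Proof.
move=> hx0 eps0.
case: (pselect (exists2 d, 0 < d & forall pi, simplex pi ->
    (eps%:E <= dist1 pi (Nset L S x0))%E -> d <= Delta L S pi x0)) => // H.
exfalso.
have hseq : forall n : nat, exists pi, simplex pi /\
    (eps%:E <= dist1 pi (Nset L S x0))%E /\ Delta L S pi x0 < (n.+1%:R)^-1.
  move=> n; apply: contrapT => hn; apply: H; exists (n.+1%:R^-1).
    by rewrite invr_gt0 ltr0n.
  move=> pi hp hd; rewrite leNgt; apply/negP => hlt; apply: hn; by exists pi.
have [u hu] := choice hseq.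
have u01 : forall n i, 0 <= u n i <= 1.
  by move=> n i; have [hs _] := hu n; exact: simplex_bnd.
have [p [p01 hp]] := box_cluster u01.
have cl : forall r N, 0 < r -> exists n, (N <= n)%N /\ norm1 (u n) p < r.
  move=> r N r0.
  have k1 : 0 < k%:R + 1 :> R by rewrite ltr_pwDr // ler0n.
  have [n [Nn hn]] := hp (r / (k%:R + 1)) N (divr_gt0 r0 k1).
  exists n; split => //.
  apply: (le_lt_trans (y := \sum_(i < k) (r / (k%:R + 1)))).
    by apply: ler_sum => i _; apply/ltW/hn.
  rewrite sumr_const card_ord.
  have -> : r / (k%:R + 1) *+ k = r / (k%:R+1) * k%:R by rewrite mulr_natr.
  rewrite mulrAC ltr_pdivrMr // mulrDr mulr1 ltrDl //.
have sp1 : \sum_i p i = 1.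
  apply/eqP; rewrite -subr_eq0 -normr_le0; apply: le0_small => r r0.
  have [n [_ hn]] := cl r 0%N r0.
  have [[_ su] _] := hu n.
  rewrite -{1}su -sumrB; apply: (le_trans (ler_norm_sum _ _ _)).
  rewrite norm1C in hn; apply/ltW; apply: le_lt_trans hn.
  by apply: ler_sum => i _.
have hsp : simplex p by split => // i; case/andP: (p01 i).
have Dp : Delta L S p x0 <= 0.
  apply: le0_small => e e0.
  have r0 : 0 < e / 2 by rewrite divr_gt0.
  have [N hN] : exists N : nat, (e / 2)^-1 < N%:R.
    by exists (Num.Def.archi_bound ((e / 2)^-1)); apply: archi_boundP; rewrite invr_ge0 ltW.
  have [n [Nn hn]] := cl (e / 2) N r0.
  have [hun [_ hD]] := hu n.
  have hlip := Vf_lip S L01 p hun hx0.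
  have hinv : (n.+1%:R)^-1 <= e / 2 :> R.
    rewrite invf_ple ?posrE ?ltr0n //.
    apply: (le_trans (ltW hN)); rewrite ler_nat; exact: leqW.
  rewrite norm1C in hn.
  have hD' := lt_le_trans hD hinv.
  move: hD'; rewrite /Delta => hD'.
  lra.
have hN : Nset L S x0 p.
  split => //; apply/le_anti; rewrite Dp /=; exact: (Delta_ge0 S L01).
have [n [_ hn]] := cl eps 0%N eps0.
have [_ [hd _]] := hu n.
have : (dist1 (u n) (Nset L S x0) <= (norm1 (u n) p)%:E)%E.
  by apply: ereal_inf_lbound; exists p.
move=> h; have := le_trans hd h; rewrite lee_fin => h2.
by move: (lt_le_trans hn h2); rewrite ltxx.
Qed.

End P2.
Section P3.
Variables (R : realType) (k : nat) (Z : finType) (Sig : eqType)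
  (L : 'I_k -> Z -> R) (S : 'I_k -> Z -> Sig) (m : nat) (w : 'I_m -> Z -> R).
Hypothesis L01 : forall a z, 0 <= L a z <= 1.
Hypothesis hrep : represents L S w.
Variable al : 'I_m.

Definition Icon := (Z + 'I_m)%type.

Definition coef (i : Icon) : Z -> R :=
  match i with
  | inl z => fun t => if t == z then -1 else 0
  | inr be => fun t => w al t - w be t
  end.

Definition gc (i : Icon) (x : Z -> R) := dotp (coef i) x.

Lemma dotp_comb (c : Z -> R) t x y : dotp c (comb t x y) = t * dotp c x + (1 - t) * dotp c y.
Proof.
rewrite /dotp /comb !mulr_sumr -big_split; apply: eq_bigr => z _ /=; ring.
Qed.

Lemma gc_inl z x : gc (inl z) x = - x z.
Proof.
rewrite /gc /dotp /= (eq_bigr (fun t => if t == z then - x t else 0)); last first.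
  by move=> t _; case: eqP => _; ring.
by rewrite -big_mkcond big_pred1_eq.
Qed.

Lemma gc_inr be x : gc (inr be) x = Vm w x al - Vm w x be.
Proof. by rewrite /gc /dotp /Vm -sumrB; apply: eq_bigr => t _ /=; ring. Qed.

Lemma cellP x : cell L S w al x <-> (\sum_z x z = 1 /\ forall i, gc i x <= 0).
Proof.
split.
  move=> [[x0 x1] hV]; split => // -[z|be].
    by rewrite gc_inl oppr_le0.
  rewrite gc_inr subr_le0 -hV; exact: (hrep (conj x0 x1)).2.
move=> [x1 hg].
have hs : simplex x.
  by split => // z; have := hg (inl z); rewrite gc_inl oppr_le0.
split => //.
have [[al0 h0] hle] := hrep hs.
apply/le_anti; rewrite hle /= h0.
by have := hg (inr al0); rewrite gc_inr subr_le0.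
Qed.

Lemma cell_simplex x : cell L S w al x -> simplex x.
Proof. by case. Qed.

Definition tight (x : Z -> R) : {set Icon} := [set i | gc i x == 0].
Definition nt (x : Z -> R) := #|~: tight x|.

Definition aT (T : {set Icon}) : Z -> R := fun t => \sum_(i in T) coef i t.

Lemma dotp_aT T y : dotp (aT T) y = \sum_(i in T) gc i y.
Proof.
rewrite /dotp /aT /gc /dotp.
rewrite (eq_bigr (fun t => \sum_(i in T) coef i t * y t)); last first.
  by move=> t _; rewrite mulr_suml.
exact: exchange_big.
Qed.

Definition FT (T : {set Icon}) := cell L S w al `&` [set y | dotp (aT T) y = 0].

Lemma FT_face T : face (cell L S w al) (FT T).
Proof.
exists (aT T), 0; split => // y /cellP [_ hg].
by rewrite dotp_aT; apply: sumr_le0 => i _.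
Qed.

Lemma FT_faces T : faces L S w (FT T).
Proof. by exists al; apply: FT_face. Qed.

Lemma FTP T y : cell L S w al y -> (FT T y <-> forall i, i \in T -> gc i y = 0).
Proof.
move=> hy; have [_ hg] := (cellP y).1 hy.
split.
  move=> [_ /=]; rewrite dotp_aT => h0 i iT.
  have h1 : \sum_(j in T) - gc j y = 0 by rewrite sumrN h0 oppr0.
  have hpos : forall j, j \in T -> 0 <= - gc j y by move=> j _; rewrite oppr_ge0.
  by have /eqP := psumr_eq0P hpos h1 iT; rewrite oppr_eq0 => /eqP.
move=> h; split => //=; rewrite dotp_aT big1 // => i; exact: h.
Qed.


Lemma aff_dotp (F : set (Z -> R)) c v y :
  (forall p, F p -> dotp c p = v) -> aff F y -> dotp c y = v.
Proof.
move=> hF [n [p [lam [hp [hl ->]]]]].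
transitivity (\sum_(j < n) lam j * dotp c (p j)).
  rewrite /dotp (eq_bigr (fun t => \sum_(j < n) c t * (lam j * p j t))); last first.
    by move=> t _; rewrite mulr_sumr.
  rewrite exchange_big; apply: eq_bigr => j _; rewrite mulr_sumr.
  by apply: eq_bigr => t _; ring.
rewrite (eq_bigr (fun j => lam j * v)); last by move=> j _; rewrite hF.
by rewrite -mulr_suml hl mul1r.
Qed.

Lemma sum_dotp (y : Z -> R) : \sum_z y z = dotp (fun _ => 1) y.
Proof. by rewrite /dotp; apply: eq_bigr => z _; rewrite mul1r. Qed.

Lemma dotp_diff_le (c : Z -> R) (x y : Z -> R) :
  dotp c y - dotp c x <= (\sum_t `|c t| + 1) * norm1 x y.
Proof.
rewrite /dotp -sumrB /norm1 mulr_sumr; apply: ler_sum => t _.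
have hc : `|c t| <= \sum_t `|c t| + 1.
  rewrite (bigD1 t) //= -addrA lerDl; apply: addr_ge0 => //.
  by apply: sumr_ge0 => i _.
have -> : c t * y t - c t * x t = c t * (y t - x t) by ring.
apply: (le_trans (ler_norm _)); rewrite normrM distrC.
by apply: ler_wpM2r.
Qed.

Lemma near_cell x : cell L S w al x -> exists2 e, 0 < e &
  forall y, \sum_z y z = 1 -> (forall i, i \in tight x -> gc i y = 0) ->
    norm1 x y < e -> cell L S w al y.
Proof.
move=> hx; have [_ hg] := (cellP x).1 hx.
pose B i := \sum_t `|coef i t| + 1.
have B0 : forall i, 0 < B i.
  by move=> i; rewrite /B ltr_wpDl // sumr_ge0.
have gneg : forall i, i \notin tight x -> gc i x < 0.
  by move=> i; rewrite inE lt_neqAle hg andbT.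
exists (\big[Order.min/1]_(i | i \notin tight x) (- gc i x / B i)).
  apply: lt_bigmin => // i hi; rewrite divr_gt0 // oppr_gt0; exact: gneg.
move=> y y1 hT hxy; apply/cellP; split => // i.
case: (boolP (i \in tight x)) => hi; first by rewrite hT.
have he := @bigmin_le_cond _ _ _ 1 i (fun j => j \notin tight x) (fun j => - gc j x / B j) hi.
have hd := dotp_diff_le (coef i) x y.
rewrite -/(gc i y) -/(gc i x) -/(B i) in hd.
have h1 : B i * norm1 x y <= - gc i x.
  have := lt_le_trans hxy he; rewrite ltr_pdivlMr // => /ltW.
  by rewrite mulrC.
lra.
Qed.

Lemma relint_FT x : cell L S w al x -> relint (FT (tight x)) x.
Proof.
move=> hx; split.
  by apply/(FTP _ hx) => i; rewrite inE => /eqP.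
have [e e0 he] := near_cell hx; exists e; split => // y hy hxy.
have hcy : cell L S w al y.
  apply: he hxy.
    rewrite sum_dotp; apply: (aff_dotp _ hy) => p [[[_ p1] _] _].
    by rewrite -sum_dotp.
  move=> i hi; apply: (aff_dotp _ hy) => p [hp hpT].
  by apply: (FTP (tight x) hp).1 => //; split.
apply/(FTP _ hcy) => i hi; apply: (aff_dotp _ hy) => p [hp hpT].
by apply: (FTP (tight x) hp).1 => //; split.
Qed.


Lemma Vm_comb t x y be : Vm w (comb t x y) be = t * Vm w x be + (1 - t) * Vm w y be.
Proof. by rewrite /Vm /comb !mulr_sumr -big_split; apply: eq_bigr => z _ /=; ring. Qed.

Lemma cell_comb t x1 x2 : 0 <= t <= 1 -> cell L S w al x1 -> cell L S w al x2 ->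
  cell L S w al (comb t x1 x2).
Proof.
move=> /andP[t0 t1] /cellP [s1 g1] /cellP [s2 g2]; apply/cellP; split.
  by rewrite sum_dotp dotp_comb -!sum_dotp s1 s2; ring.
move=> i; rewrite /gc dotp_comb -/(gc i x1) -/(gc i x2).
have := g1 i; have := g2 i; nra.
Qed.

Lemma Delta_concave pi t x1 x2 : simplex pi -> 0 <= t <= 1 ->
  cell L S w al x1 -> cell L S w al x2 ->
  t * Delta L S pi x1 + (1 - t) * Delta L S pi x2 <= Delta L S pi (comb t x1 x2).
Proof.
move=> hp ht h1 h2.
have hc := cell_comb ht h1 h2.
have hv := Vf_concave S L01 hp ht (cell_simplex h1) (cell_simplex h2).
rewrite /Delta hc.2 h1.2 h2.2 Vm_comb.
lra.
Qed.

Lemma N_incl x x' : cell L S w al x -> FT (tight x) x' ->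
  Nset L S x `<=` Nset L S x'.
Proof.
move=> hx hx' pi [hp hD0]; split => //.
have hcx' : cell L S w al x' by case: hx'.
have htx' := (FTP (tight x) hcx').1 hx'.
have [e e0 he] := near_cell hx.
set d := norm1 x x'.
have d0 : 0 <= d := norm1_ge0 x x'.
pose s := e / (2 * (d + 1)).
have s0 : 0 < s by rewrite divr_gt0 // mulr_gt0 // ltr_pwDr.
have sd : s * d < e.
  rewrite /s mulrAC ltr_pdivrMr ?mulr_gt0 ?ltr_pwDr //; nra.
pose x'' := comb (1 + s) x x'.
have hx'' : cell L S w al x''.
  apply: he.
  - by rewrite sum_dotp dotp_comb -!sum_dotp hx.1.2 hcx'.1.2; ring.
  - move=> i hi; rewrite /gc dotp_comb -/(gc i x) -/(gc i x') htx' //.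
    by move: hi; rewrite inE => /eqP ->; ring.
  - apply: le_lt_trans sd; rewrite /d /norm1 mulr_sumr; apply: ler_sum => z _.
    have -> : x z - x'' z = s * (x' z - x z) by rewrite /x'' /comb; ring.
    by rewrite normrM gtr0_norm // distrC.
pose t := (1 + s)^-1.
have t0 : 0 < t by rewrite invr_gt0 ltr_pwDr.
have t1 : t < 1 by rewrite invf_lt1 ?ltr_pwDr // ltrDl.
have ex : comb t x'' x' = x.
  apply: funext => z; rewrite /comb /x'' /comb /t.
  have hs : 1 + s != 0 by rewrite gt_eqF // ltr_pwDr.
  by field.
have := Delta_concave hp (t := t) _ hx'' hcx'.
rewrite ex hD0 => /(_ _).
have := Delta_ge0 S L01 hp (cell_simplex hx'').
have := Delta_ge0 S L01 hp (cell_simplex hcx').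
move=> g1 g2 h; have {h} h := h (ltac:(apply/andP; split; apply/ltW)).
apply/le_anti; rewrite g1 andbT.
nra.
Qed.

End P3.
Section P4.
Variables (R : realType) (k : nat) (Z : finType) (Sig : eqType)
  (L : 'I_k -> Z -> R) (S : 'I_k -> Z -> Sig) (m : nat) (w : 'I_m -> Z -> R)
  (eps : R) (G : set (set (Z -> R))).
Hypothesis L01 : forall a z, 0 <= L a z <= 1.
Hypothesis hrep : represents L S w.
Hypothesis eps0 : 0 < eps.
Hypothesis hG : G `<=` faces L S w.
Hypothesis hU : Uset L S w G !=set0.

Let U := Uset L S w G.

Lemma U_simplex u : U u -> simplex u.
Proof.
move=> [F [[al [a [b [_ ->]]]] _] [[hs _] _]]; exact: hs.
Qed.

Definition dr (x : Z -> R) := fine (dist1 x U).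

Lemma dist_fin x : simplex x -> dist1 x U = (dr x)%:E /\ 0 <= dr x <= 2.
Proof.
move=> hx; have [u0 hu0] := hU.
have h1 : (dist1 x U <= (norm1 x u0)%:E)%E by apply: ereal_inf_lbound; exists u0.
have h0 : (0 <= dist1 x U)%E.
  by apply: le_ereal_inf_tmp => _ [u _ <-]; rewrite lee_fin norm1_ge0.
have hf : dist1 x U \is a fin_num.
  by rewrite ge0_fin_numE // (le_lt_trans h1) // ltry.
have e : dist1 x U = (dr x)%:E by rewrite /dr fineK.
split => //; rewrite e lee_fin in h0 h1; rewrite h0 /=.
move: h1; rewrite lee_fin => h1; apply: (le_trans h1); exact: (norm1_le2 hx (U_simplex hu0)).
Qed.

Lemma dist_U u : U u -> dr u = 0.
Proof.
move=> hu; have [e /andP [h0 _]] := dist_fin (U_simplex hu).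
have : (dist1 u U <= (norm1 u u)%:E)%E by apply: ereal_inf_lbound; exists u.
by rewrite e norm1xx lee_fin => h; apply/le_anti; rewrite h h0.
Qed.

Lemma dist_tri x b : simplex x -> simplex b -> dr x <= norm1 x b + dr b.
Proof.
move=> hx hb; have [ex _] := dist_fin hx; have [eb _] := dist_fin hb.
suff : ((dr x - norm1 x b)%:E <= dist1 b U)%E by rewrite eb lee_fin; lra.
apply: le_ereal_inf_tmp => _ [u hu <-]; rewrite lee_fin.
have : (dist1 x U <= (norm1 x u)%:E)%E by apply: ereal_inf_lbound; exists u.
rewrite ex lee_fin => h; have := norm1_triangle x b u; lra.
Qed.

Lemma Pi_simplex pi : PiSet L S eps G pi -> simplex pi.
Proof. by case. Qed.

Lemma delta_T al (T : {set Icon Z m}) : exists p : R * (Z -> R), 0 < p.1 /\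
  ((exists x, cell L S w al x /\ tight w al x = T) ->
    [/\ cell L S w al p.2, tight w al p.2 = T &
      (G (FT L S w al T) -> forall pi, PiSet L S eps G pi -> p.1 <= Delta L S pi p.2)]).
Proof.
case: (pselect (exists x, cell L S w al x /\ tight w al x = T)); last first.
  by move=> hno; exists (1, fun _ => 0); split => // h; exfalso; apply: hno.
move=> [x0 [hx0 hT]].
have [d d0 hd] := delta_pos S L01 (cell_simplex hx0) eps0.
exists (d, x0); split => // _; split => // hGT pi [hp hF].
apply: hd => //.
have hri := relint_FT hrep hx0; rewrite hT in hri.
have ne : FT L S w al T !=set0 by exists x0; case: hri.
have := hF _ hGT ne; rewrite /NF.
set x' := xget _ _.
have hx' : relint (FT L S w al T) x' by apply: xgetI hri.
have hinc := N_incl L01 hrep hx0 (x' := x'); rewrite hT in hinc.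
have {}hinc := hinc (proj1 hx').
move=> h; apply: le_trans h _.
apply: ereal_inf_le_tmp => _ [q hq <-]; exists q => //; exact: hinc.
Qed.


Lemma ray al x0 x : cell L S w al x0 -> cell L S w al x ->
  tight w al x0 = tight w al x -> x != x0 ->
  exists b t, [/\ cell L S w al b, (nt w al b < nt w al x)%N, 0 < t <= 1 &
    x = comb t b x0].
Proof.
move=> h0 h1 hT hne.
have [s0 g0] := (cellP hrep al x0).1 h0.
have [s1 g1] := (cellP hrep al x).1 h1.
have [z hz] : exists z, x z < x0 z.
  apply: contrapT => hno.
  have hge : forall z, 0 <= x z - x0 z.
    move=> z; rewrite subr_ge0 leNgt; apply/negP => hlt; apply: hno; by exists z.
  have hs : \sum_z (x z - x0 z) = 0 by rewrite sumrB s0 s1 subrr.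
  move/eqP: hne; apply; apply: funext => z'.
  have hge' : forall z, true -> 0 <= x z - x0 z by move=> z _; exact: hge.
  have := psumr_eq0P hge' hs (i := z') isT.
  by move/eqP; rewrite subr_eq0 => /eqP.
pose g i y := gc w al i y.
pose P := fun i => (i \notin tight w al x) && (g i x0 < g i x).
pose lam := fun i => - g i x0 / (g i x - g i x0).
have x0z : 0 < x0 z.
  by apply: le_lt_trans hz; case: (cell_simplex h1) => + _; apply.
have Pz : P (inl z).
  apply/andP; split.
    by rewrite -hT inE /g gc_inl oppr_eq0 gt_eqF.
  by rewrite /g !gc_inl ltrN2.
have [i1 Pi1 hmin] : exists2 i, P i & forall j, P j -> lam i <= lam j.
  by case: (arg_minP lam Pz) => i hi hm; exists i.
have /andP [ni1 lt1] := Pi1.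
have gx_neg : g i1 x < 0.
  by move: ni1; rewrite inE lt_neqAle => ->; exact: g1.
set La := lam i1.
have dpos : 0 < g i1 x - g i1 x0 by rewrite subr_gt0.
have La1 : 1 < La.
  by rewrite /La /lam ltr_pdivlMr // mul1r; lra.
have La0 : 0 < La by lra.
pose b := comb La x x0.
have gb : forall i, g i b = La * g i x + (1 - La) * g i x0.
  by move=> i; rewrite /g /gc dotp_comb.
have hb : cell L S w al b.
  apply/(cellP hrep); split.
    by rewrite sum_dotp dotp_comb -!sum_dotp s0 s1; ring.
  move=> i; rewrite -/(g i b) gb.
  case: (boolP (i \in tight w al x)) => hi.
    have e1 : g i x = 0 by move: hi; rewrite inE => /eqP.
    have e0 : g i x0 = 0 by move: hi; rewrite -hT inE => /eqP.
    by rewrite e1 e0; lra.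
  have gi0 : g i x0 < 0.
    by move: hi; rewrite -hT inE lt_neqAle => ->; exact: g0.
  case: (ltP (g i x0) (g i x)) => hlt.
    have Pi : P i by apply/andP.
    have h := hmin i Pi.
    have : La * (g i x - g i x0) <= - g i x0.
      by rewrite -ler_pdivlMr ?subr_gt0.
    lra.
  nra.
have gbi1 : g i1 b = 0.
  rewrite gb.
  have : La * (g i1 x - g i1 x0) = - g i1 x0.
    by rewrite /La /lam divfK // gt_eqF.
  lra.
exists b, La^-1; split => //.
- apply: proper_card; apply/properP; split.

    apply/fintype.subsetP => i; rewrite !inE; apply: contra => hi.
    have hiT : i \in tight w al x by rewrite inE.
    have e1 : g i x = 0 by apply/eqP.
    have e0 : g i x0 = 0 by move: hiT; rewrite -hT inE => /eqP.
    by apply/eqP; rewrite -/(g i b) gb e1 e0 !mulr0 addr0.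
  exists i1; first by rewrite inE.
  by rewrite !inE negbK -/(g i1 b) gbi1.
- rewrite invr_gt0 La0 /= invf_le1 //; exact: ltW.
- apply: funext => z'; rewrite /b /comb.
  have hL : La != 0 by rewrite gt_eqF.
  by field.
Qed.

Lemma comb_norm t (b x0 : Z -> R) : 0 <= t <= 1 -> simplex b -> simplex x0 ->
  norm1 (comb t b x0) b <= 2 * (1 - t).
Proof.
move=> /andP[t0 t1] hb hx0.
have -> : norm1 (comb t b x0) b = (1 - t) * norm1 x0 b.
  rewrite /norm1 mulr_sumr; apply: eq_bigr => z _.
  have -> : comb t b x0 z - b z = (1 - t) * (x0 z - b z) by rewrite /comb; ring.
  by rewrite normrM ger0_norm // subr_ge0.
have := norm1_le2 hx0 hb; have := norm1_ge0 x0 b; nra.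
Qed.


Lemma induct al n : exists2 c, 0 < c & forall x, cell L S w al x ->
  (nt w al x <= n)%N ->
  forall pi, PiSet L S eps G pi -> c * dr x <= Delta L S pi x.
Proof.
elim: n => [|n [c c0 hc]].
  exists 1 => // x hx hn; exfalso.
  have h0 : ~: tight w al x = finset.set0 by apply/eqP; rewrite -cards_eq0 -leqn0.
  have hall : forall z, x z = 0.
    move=> z; have : inl z \in tight w al x by rewrite -[tight _ _ _]finset.setCK h0 finset.setC0 inE.
    by rewrite inE gc_inl oppr_eq0 => /eqP.
  have := (cell_simplex hx).2; rewrite big1 // => /eqP.
  by rewrite eq_sym oner_eq0.
have [f hf] := choice (delta_T al).
pose dm := \big[Order.min/1]_(T : {set Icon Z m}) (f T).1.
have dm0 : 0 < dm by apply: lt_bigmin => // T _; case: (hf T).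
have dmT : forall T, dm <= (f T).1 by move=> T; exact: bigmin_le.
pose c' := Order.min (dm / 8) (c / 2).
have c'0 : 0 < c' by rewrite lt_min !divr_gt0.
have c'1 : c' <= dm / 8 by rewrite ge_min lexx.
have c'2 : c' <= c / 2 by rewrite ge_min lexx orbT.
exists c' => // x hx hn pi hpi.
have hp := Pi_simplex hpi.
have hxs := cell_simplex hx.
have [_ /andP [dx0 dx2]] := dist_fin hxs.
have Dx0 := Delta_ge0 S L01 hp hxs.
case: (leqP (nt w al x) n) => hle.
  have := hc x hx hle pi hpi; nra.
have [hd0 himp] := hf (tight w al x).
have [hx0c hx0T hGimp] := himp (ex_intro _ x (conj hx erefl)).
case: (pselect (G (FT L S w al (tight w al x)))) => hGT; last first.
  have hU' : U x.
    exists (FT L S w al (tight w al x)); first by split => //; exact: FT_faces hrep al _.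
    by apply/(FTP hrep _ hx) => i; rewrite inE => /eqP.
  by rewrite dist_U // mulr0.
have hdx0 := hGimp hGT pi hpi.
have dmd := dmT (tight w al x).
case: (eqVneq x (f (tight w al x)).2) => [ex | hne].
  have e : Delta L S pi x = Delta L S pi (f (tight w al x)).2 by rewrite -ex.
  rewrite e; nra.
have [b [t [hb hnt ht ex]]] := ray hx0c hx hx0T hne.
have hbs := cell_simplex hb.
have hx0s := cell_simplex hx0c.
have [_ /andP [db0 db2]] := dist_fin hbs.
have hbn : (nt w al b <= n)%N by rewrite -ltnS; exact: leq_trans hnt hn.
have hcb := hc b hb hbn pi hpi.
have ht' : 0 <= t <= 1 by case/andP: ht => h1 h2; rewrite h2 ltW.
have hconc := Delta_concave L01 hrep hp ht' hb hx0c; rewrite -ex in hconc.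
have htri := dist_tri hxs hbs.
have hnb := comb_norm ht' hbs hx0s; rewrite -ex in hnb.
have Db0 := Delta_ge0 S L01 hp hbs.
case/andP: ht => t0 t1.
have h1 : c' * dr x <= c' * (2 * (1 - t) + dr b).
  apply: ler_wpM2l; first exact: ltW.
  lra.
case: (leP t (1/2)) => htl.
  have h2 : c' * (2 * (1 - t) + dr b) <= c' * 4.
    apply: ler_wpM2l; first exact: ltW.
    lra.
  have h3 : (1 - t) * (f (tight w al x)).1 <= (1 - t) * Delta L S pi (f (tight w al x)).2.
    apply: ler_wpM2l; lra.
  have h4 : 0 <= t * Delta L S pi b by apply: mulr_ge0 => //; lra.
  nra.
have h2 : c' * (2 * (1 - t)) <= dm / 8 * (2 * (1 - t)).
  apply: ler_wpM2r; lra.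
have h3 : c' * dr b <= c / 2 * dr b by apply: ler_wpM2r.
have h4 : c / 2 * dr b <= t * (c * dr b).
  have hh : 0 <= (t - 1/2) * (c * dr b).
    by apply: mulr_ge0; [lra | apply: mulr_ge0 => //; exact: ltW].
  lra.
have h5 : t * (c * dr b) <= t * Delta L S pi b by apply: ler_wpM2l => //; exact: ltW.
have h6 : (1 - t) * (f (tight w al x)).1 <= (1 - t) * Delta L S pi (f (tight w al x)).2.
  apply: ler_wpM2l; lra.
nra.
Qed.

End P4.
Unset Implicit Arguments.

Theorem lemma10 (R : realType) (k : nat) (Z : finType) (Sig : eqType)
  (L : 'I_k -> Z -> R) (S : 'I_k -> Z -> Sig)
  (m : nat) (w : 'I_m -> Z -> R) (eps : R) (G : set (set (Z -> R))) :
  (forall a z, 0 <= L a z <= 1) ->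
  minimal_rep L S w ->
  0 < eps ->
  G `<=` faces L S w ->
  Uset L S w G !=set0 ->
  exists c : R, 0 < c /\
    forall x : Z -> R, simplex x ->
      (c%:E * gfun L S w G x <= ffun L S eps G x)%E.
Proof.
move=> L01 [hrep _] eps0 hG hU.
have hc : forall al, exists c, 0 < c /\ forall x, cell L S w al x ->
    forall pi, PiSet L S eps G pi -> c * dr L S w G x <= Delta L S pi x.
  move=> al; have [c c0 h] := induct L01 hrep eps0 hU al #|{: Icon Z m}|.
  exists c; split => // x hx; apply: h hx _; exact: max_card.
have [cf hcf] := choice hc.
exists (\big[Order.min/1]_al cf al); split.
  by apply: lt_bigmin => // al _; case: (hcf al).
move=> x hx.
have [[al hal] _] := hrep x hx.
have hcx : cell L S w al x by split.
have [e /andP [d0 _]] := dist_fin hU hx.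
rewrite /gfun e; apply: le_ereal_inf_tmp => _ [pi hpi <-].
rewrite -EFinM lee_fin.
have [c0 h] := hcf al.
apply: le_trans (h x hcx pi hpi).
apply: ler_wpM2r => //; exact: bigmin_le.
Qed.
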